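(* Let $A$ be a ring for which every element is a sum of units. Then $A$ is the only factroid of $A$ that contains a left-regular element. Thus, if $A$ is moreover an integral domain, then the only factroids of $A$ are $\{0\}$ and $A$.
   Context: Rings are unital, not necessarily commutative. $\mathrm{reg}(A)$ denotes the set of left-regular elements (left nonzerodivisors) of $A$. A factroid of $A$ is an additive subgroup $F$ of $A$ such that for all $a\in A$ and $b\in\mathrm{reg}(A)$, $ba\in F$ implies $a\in F$. *)

(* Defs.v *)
From HB Require Import structures.
From mathcomp Require Import all_boot all_order all_algebra.
Set Implicit Arguments. Unset Strict Implicit. Unset Printing Implicit Defensive.
Import GRing.Theory.
Local Open Scope ring_scope.

Definition is_unit (A : pzRingType) (u : A) : Prop :=
  exists v : A, u * v = 1 /\ v * u = 1.

Definition sum_of_units (A : pzRingType) (a : A) : Prop :=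
  exists s : seq A, (forall u, u \in s -> is_unit u) /\ a = \sum_(u <- s) u.

(* left-regular element: b * a = 0 -> a = 0, i.e. left multiplication by b injective *)
Definition left_regular (A : pzRingType) (b : A) : Prop := GRing.lreg b.

Definition additive_subgroup (A : pzRingType) (F : A -> Prop) : Prop :=
  F 0 /\ (forall x y, F x -> F y -> F (x - y)).

Definition factroid (A : pzRingType) (F : A -> Prop) : Prop :=
  additive_subgroup F /\
  (forall a b : A, left_regular b -> F (b * a) -> F a).

Definition integral_domain (A : pzRingType) : Prop :=
  (1 : A) <> 0 /\ (forall x y : A, x * y = y * x) /\
  (forall x y : A, x * y = 0 -> x = 0 \/ y = 0).

(* Main.v *)
Require Import Defs.
From HB Require Import structures.
From mathcomp Require Import all_boot all_order all_algebra.
From Stdlib Require Import Classical.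
Import GRing.Theory.
Local Open Scope ring_scope.

Lemma fact_add (A : pzRingType) (F : A -> Prop) : additive_subgroup F ->
  forall x y, F x -> F y -> F (x + y).
Proof.
move=> [F0 Fs] x y Fx Fy.
have := Fs x (0 - y) Fx (Fs 0 y F0 Fy).
by rewrite sub0r opprK.
Qed.

Lemma part1 (A : pzRingType) (hA : forall a : A, sum_of_units a)
  (F : A -> Prop) : factroid F ->
     (exists b : A, left_regular b /\ F b) -> forall x : A, F x.
Proof.
move=> [Fg Fr] [b [rb Fb]].
have Fu : forall u, is_unit u -> F u.
  move=> u [v [uv vu]].
  apply: (Fr u (b * v)).
    move=> x y /= h.
    have h1 : v * x = v * y by apply: rb; rewrite /= !mulrA.
    by rewrite -[x]mul1r -[y]mul1r -uv -!mulrA h1.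
  by rewrite -mulrA vu mulr1.
move=> x; have [s [hs ->]] := hA x.
elim: s hs => [|u s IH] hs.
  by rewrite big_nil; case: Fg.
rewrite big_cons; apply: fact_add => //.
  by apply: Fu; apply: hs; rewrite in_cons eqxx.
by apply: IH => w hw; apply: hs; rewrite in_cons hw orbT.
Qed.

Theorem theorem4p12 (A : pzRingType)
  (hA : forall a : A, sum_of_units a) :
  (forall F : A -> Prop, factroid F ->
     (exists b : A, left_regular b /\ F b) -> forall x : A, F x) /\
  (integral_domain A ->
     forall F : A -> Prop, factroid F ->
       (forall x : A, F x <-> x = 0) \/ (forall x : A, F x)).
Proof.
split; first exact: part1.
move=> [_ [_ hd]] F hF.
case: (classic (exists x, F x /\ x <> 0)) => [[x [Fx nx]]|hn].
  right; apply: part1 => //; exists x; split => //.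
  move=> a c /= h.
  have : x * (a - c) = 0 by rewrite mulrBr h subrr.
  case/hd => // /eqP; rewrite subr_eq0 => /eqP //.
left => x; split.
  move=> Fx; apply: NNPP => nx; apply: hn; by exists x.
by move=> ->; case: hF => [[]].
Qed.
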